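(* Let $0<q<1$, let $r\ge1$, $s\ge1$ be integers with $r-1\le s$, and $\alpha\in\mathbb{R}\setminus\mathbb{Z}_-$. Let $a_j>0$ real and $b_j\in\mathbb{C}$ ($j=1,\dots,r-1$), and $c_\ell>0$ real and $d_\ell\in\mathbb{C}$ ($\ell=1,\dots,s-1$), with $a_jn+\mathrm{Re}(b_j)\notin\mathbb{Z}_-$ and $c_\ell n+\mathrm{Re}(d_\ell)\notin\mathbb{Z}_-$ for all positive integers $n$ (when $r=1$ there are no $a_j,b_j$; when $s=1$ there are no $c_\ell,d_\ell$; empty products equal $1$). Put $A=\dfrac{\prod_{j=1}^{r-1}[a_j]_q}{\prod_{\ell=1}^{s-1}[c_\ell]_q}$ and $$\lambda_n=\frac{q^{n+\alpha}\prod_{\ell=1}^{s-1}[n]_{q^{c_\ell}}}{[n]_q\prod_{j=1}^{r-1}[n]_{q^{a_j}}}(q-1).$$ Then for every $z\in\mathbb{C}$, $$\lim_{n\to+\infty}{}_r\phi_s\!\left(\begin{array}{c}q^{-n},q^{a_1n+b_1},\dots,q^{a_{r-1}n+b_{r-1}}\\ q^{\alpha},q^{c_1n+d_1},\dots,q^{c_{s-1}n+d_{s-1}}\end{array};q,\lambda_n z\right)=\sum_{k=0}^{\infty}(-1)^{(1+r-s)k}q^{(2+s-r)\binom k2}A^k\frac{z^k q^{\alpha k}(1-q)^{(2+r-s)k}}{(q^{\alpha};q)_k(q;q)_k}.$$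
   Context: $\mathbb{Z}_-=\{0,-1,-2,\dots\}$. For $w\in\mathbb{C}$, $q^{w}:=e^{w\ln q}$. For $a\in\mathbb{C}$: $(a;q)_0=1$, $(a;q)_k=\prod_{j=0}^{k-1}(1-aq^{j})$, and $(a_1,\dots,a_r;q)_k=\prod_{i=1}^r(a_i;q)_k$. The $q$-number is $[z]_q=\dfrac{1-q^{z}}{1-q}$, and $[n]_{q^{a}}=\dfrac{1-q^{an}}{1-q^{a}}$. The basic hypergeometric series is $${}_r\phi_s\!\left(\begin{array}{c}a_1,\dots,a_r\\ b_1,\dots,b_s\end{array};q,z\right)=\sum_{k=0}^{\infty}\frac{(a_1,\dots,a_r;q)_k}{(b_1,\dots,b_s;q)_k}(-1)^{(1+s-r)k}q^{(1+s-r)\binom{k}{2}}\frac{z^k}{(q;q)_k};$$ when one numerator parameter is $q^{-n}$ it is a polynomial in $z$ of degree at most $n$. *)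

(* Defs.v *)
From Stdlib Require Import Reals Lra Lia ZArith List.
From Coquelicot Require Import Coquelicot.
Open Scope R_scope.

(* q^w := e^{w ln q} for complex w, written out: exp(Re w ln q) (cos(Im w ln q) + i sin(Im w ln q)). *)
Definition qpow (q : R) (w : C) : C :=
  (exp (Re w * ln q) * cos (Im w * ln q), exp (Re w * ln q) * sin (Im w * ln q)).

Fixpoint qpoch (a : C) (q : R) (k : nat) : C :=
  match k with
  | O => RtoC 1
  | S k' => Cmult (qpoch a q k') (Cminus (RtoC 1) (Cmult a (RtoC (q ^ k'))))
  end.

Definition qpoch_list (l : list C) (q : R) (k : nat) : C :=
  fold_right Cmult (RtoC 1) (map (fun a => qpoch a q k) l).

Definition binom2 (k : nat) : nat := (k * (k - 1) / 2)%nat.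

Definition phi_term (num den : list C) (q : R) (z : C) (k : nat) : C :=
  let r := Z.of_nat (length num) in
  let s := Z.of_nat (length den) in
  Cmult (Cdiv (qpoch_list num q k) (qpoch_list den q k))
   (Cmult (RtoC (powerRZ (-1) ((1 + s - r) * Z.of_nat k)%Z
                 * powerRZ q ((1 + s - r) * Z.of_nat (binom2 k))%Z))
          (Cdiv (pow_n z k) (qpoch (RtoC q) q k))).

Definition rphis (num den : list C) (q : R) (z : C) : C :=
  (real (Lim_seq (fun N => Re (sum_n (phi_term num den q z) N))),
   real (Lim_seq (fun N => Im (sum_n (phi_term num den q z) N)))).


Definition qnum (p x : R) : R := (1 - Rpower p x) / (1 - p).

Definition rprod (m : nat) (f : nat -> R) : R :=
  fold_right Rmult 1 (map f (seq 0 m)).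

(* Main.v *)
Require Import Defs.
From Stdlib Require Import Reals Lra Lia ZArith List.
From Coquelicot Require Import Coquelicot.
Open Scope R_scope.


Definition Ccv (u : nat -> C) (l : C) := is_lim_seq (fun n => Cmod (Cminus (u n) l)) 0.

Lemma Cmod_ge0 x : 0 <= Cmod x. Proof. apply Cmod_ge_0. Qed.

Lemma lim0_ev u : is_lim_seq u 0 -> forall eps, 0 < eps -> eventually (fun n => Rabs (u n) < eps).
Proof.
  intros H eps He. apply is_lim_seq_spec in H. specialize (H (mkposreal eps He)).
  eapply filter_imp; [|exact H]. intros n Hn. simpl in Hn. rewrite Rminus_0_r in Hn. exact Hn.
Qed.

Lemma Ccv_const c : Ccv (fun _ => c) c.
Proof.
  unfold Ccv. replace (Cminus c c) with (RtoC 0) by ring. rewrite Cmod_0. apply is_lim_seq_const.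
Qed.

Lemma Ccv_ext_loc u v l : eventually (fun n => u n = v n) -> Ccv u l -> Ccv v l.
Proof.
  intros He H. unfold Ccv. eapply is_lim_seq_ext_loc; [|exact H].
  eapply filter_imp; [|exact He]. intros n Hn; simpl. now rewrite Hn.
Qed.

Lemma Ccv_RtoC u (l : R) : is_lim_seq u l -> Ccv (fun n => RtoC (u n)) (RtoC l).
Proof.
  intros H. unfold Ccv.
  eapply is_lim_seq_ext.
  { intros n. instantiate (1 := fun n => Rabs (u n - l)). simpl.
    replace (Cminus (RtoC (u n)) (RtoC l)) with (RtoC (u n - l)) by (unfold RtoC, Cminus, Cplus, Copp; simpl; f_equal; ring).
    symmetry; apply Cmod_R. }
  replace 0 with (Rabs (l - l)) by (rewrite Rminus_diag; apply Rabs_R0).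
  apply (is_lim_seq_abs (fun n => u n - l) (l - l)).
  apply is_lim_seq_minus'; [exact H| apply is_lim_seq_const].
Qed.

Lemma squeeze0 (u w : nat -> R) : eventually (fun n => u n <= w n) -> (forall n, 0 <= u n) ->
  is_lim_seq w 0 -> is_lim_seq u 0.
Proof.
  intros He Hp Hw. apply is_lim_seq_le_le_loc with (u := fun _ => 0) (w := w).
  - eapply filter_imp; [|exact He]. intros n Hn. split; [apply Hp|exact Hn].
  - apply is_lim_seq_const.
  - exact Hw.
Qed.

Lemma Ccv_mult u v a b : Ccv u a -> Ccv v b -> Ccv (fun n => Cmult (u n) (v n)) (Cmult a b).
Proof.
  unfold Ccv. intros Hu Hv.
  apply squeeze0 with (w := fun n => Cmod (Cminus (u n) a) * (Cmod (Cminus (v n) b) + Cmod b)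
     + Cmod a * Cmod (Cminus (v n) b)).
  - apply filter_forall. intros n.
    replace (Cminus (Cmult (u n) (v n)) (Cmult a b)) with
      (Cplus (Cmult (Cminus (u n) a) (Cplus (Cminus (v n) b) b)) (Cmult a (Cminus (v n) b))) by ring.
    eapply Rle_trans; [apply Cmod_triangle|]. rewrite !Cmod_mult.
    apply Rplus_le_compat_r. apply Rmult_le_compat_l; [apply Cmod_ge0|apply Cmod_triangle].
  - intros; apply Cmod_ge0.
  - replace 0 with (0 * (0 + Cmod b) + Cmod a * 0) by ring.
    apply is_lim_seq_plus'; [apply is_lim_seq_mult'; [exact Hu|]|apply is_lim_seq_mult'; [apply is_lim_seq_const|exact Hv]].
    apply is_lim_seq_plus'; [exact Hv|apply is_lim_seq_const].
Qed.

Lemma Ccv_minus u v a b : Ccv u a -> Ccv v b -> Ccv (fun n => Cminus (u n) (v n)) (Cminus a b).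
Proof.
  unfold Ccv. intros Hu Hv.
  apply squeeze0 with (w := fun n => Cmod (Cminus (u n) a) + Cmod (Cminus (v n) b)).
  - apply filter_forall. intros n.
    replace (Cminus (Cminus (u n) (v n)) (Cminus a b)) with
      (Cplus (Cminus (u n) a) (Copp (Cminus (v n) b))) by ring.
    eapply Rle_trans; [apply Cmod_triangle|]. rewrite Cmod_opp. lra.
  - intros; apply Cmod_ge0.
  - replace 0 with (0 + 0) by ring. apply is_lim_seq_plus'; assumption.
Qed.

Lemma Ccv_inv v b : Ccv v b -> b <> RtoC 0 -> Ccv (fun n => Cinv (v n)) (Cinv b).
Proof.
  unfold Ccv. intros Hv Hb.
  assert (Hbp : 0 < Cmod b) by (apply Cmod_gt_0; exact Hb).
  apply squeeze0 with (w := fun n => Cmod (Cminus (v n) b) * (2 / (Cmod b * Cmod b))).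
  - assert (He := lim0_ev _ Hv (Cmod b / 2) ltac:(lra)).
    eapply filter_imp; [|exact He]. intros n Hn. cbv beta in Hn. rewrite Rabs_pos_eq in Hn by apply Cmod_ge0.
    assert (Hvn : Cmod b / 2 <= Cmod (v n)).
    { assert (Cmod b <= Cmod (v n) + Cmod (Cminus b (v n))).
      { replace b with (Cplus (v n) (Cminus b (v n))) at 1 by ring. apply Cmod_triangle. }
      replace (Cminus b (v n)) with (Copp (Cminus (v n) b)) in H by ring. rewrite Cmod_opp in H. lra. }
    assert (Hv0 : v n <> RtoC 0). { intros E. rewrite E, Cmod_0 in Hvn. lra. }
    replace (Cminus (Cinv (v n)) (Cinv b)) with (Cdiv (Copp (Cminus (v n) b)) (Cmult (v n) b)) by (field; split; assumption).
    rewrite Cmod_div, Cmod_opp, Cmod_mult.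
    2:{ intros E. apply (f_equal Cmod) in E. rewrite Cmod_0, Cmod_mult in E. apply Rmult_integral in E.
        destruct E as [E|E]; [apply Hv0|apply Hb]; now apply Cmod_eq_0. }
    unfold Rdiv. apply Rmult_le_compat_l; [apply Cmod_ge0|].
    replace (2 * / (Cmod b * Cmod b)) with (/ (Cmod b / 2 * Cmod b)) by (field; lra).
    apply Rinv_le_contravar; [nra|]. apply Rmult_le_compat_r; lra.
  - intros; apply Cmod_ge0.
  - replace 0 with (0 * (2 / (Cmod b * Cmod b))) by ring.
    apply is_lim_seq_mult'; [exact Hv|apply is_lim_seq_const].
Qed.

Lemma Ccv_Re u l : Ccv u l -> is_lim_seq (fun n => Re (u n)) (Re l).
Proof.
  unfold Ccv. intros H. apply is_lim_seq_spec. intros eps.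
  assert (He := lim0_ev _ H eps (cond_pos eps)). eapply filter_imp; [|exact He].
  intros n Hn. cbv beta in Hn. rewrite Rabs_pos_eq in Hn by apply Cmod_ge0.
  eapply Rle_lt_trans; [|exact Hn]. 
  replace (Re (u n) - Re l) with (Re (Cminus (u n) l)) by (destruct (u n), l; unfold Cminus, Cplus, Copp, Re, Im; simpl; ring). apply re_le_Cmod.
Qed.

Lemma im_le_Cmod' c : Rabs (Im c) <= Cmod c.
Proof.
  replace (Im c) with (Re (Cmult (@pair R R 0 (-1)) c)) by (destruct c; unfold Cmult, Re, Im; simpl; ring).
  eapply Rle_trans; [apply re_le_Cmod|]. rewrite Cmod_mult.
  replace (Cmod (@pair R R 0 (-1))) with 1. lra.
  unfold Cmod; simpl. replace (0 * (0 * 1) + -1 * (-1 * 1)) with 1 by ring. now rewrite sqrt_1.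
Qed.

Lemma Ccv_Im u l : Ccv u l -> is_lim_seq (fun n => Im (u n)) (Im l).
Proof.
  unfold Ccv. intros H. apply is_lim_seq_spec. intros eps.
  assert (He := lim0_ev _ H eps (cond_pos eps)). eapply filter_imp; [|exact He].
  intros n Hn. cbv beta in Hn. rewrite Rabs_pos_eq in Hn by apply Cmod_ge0.
  eapply Rle_lt_trans; [|exact Hn]. 
  replace (Im (u n) - Im l) with (Im (Cminus (u n) l)) by (destruct (u n), l; unfold Cminus, Cplus, Copp, Re, Im; simpl; ring). apply im_le_Cmod'.
Qed.

Lemma C_lim_comp (u : nat -> C) (x y : R) : is_lim_seq (fun n => Re (u n)) x -> is_lim_seq (fun n => Im (u n)) y ->
  filterlim u eventually (locally ((x, y) : C)).
Proof.
  intros Hx Hy P [eps HP].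
  assert (H1 := Hx _ (locally_ball x eps)). assert (H2 := Hy _ (locally_ball y eps)).
  unfold filtermap in *. 
  eapply filter_imp; [|exact (filter_and _ _ H1 H2)]. intros n [A B]. apply HP. split; assumption.
Qed.


Lemma pow_le1 x n : 0 <= x <= 1 -> x ^ n <= 1.
Proof. intros H. induction n; simpl; [lra|]. assert (0 <= x ^ n) by (apply pow_le; lra). nra. Qed.

Fixpoint rq (x q : R) (k : nat) : R :=
  match k with O => 1 | S k' => rq x q k' * (1 - x * q ^ k') end.

Lemma qpoch_RtoC x q k : qpoch (RtoC x) q k = RtoC (rq x q k).
Proof.
  induction k as [|k IH]; simpl; [reflexivity|]. rewrite IH.
  unfold RtoC, Cmult, Cminus, Cplus, Copp; simpl. f_equal; ring.
Qed.

Lemma Ccv_qpoch xs x q k : Ccv xs x -> Ccv (fun n => qpoch (xs n) q k) (qpoch x q k).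
Proof.
  intros H. induction k as [|k IH]; simpl.
  - apply Ccv_const.
  - apply Ccv_mult; [exact IH|]. apply Ccv_minus; [apply Ccv_const|].
    apply Ccv_mult; [exact H|apply Ccv_const].
Qed.

Lemma qpoch_zero q k : qpoch (RtoC 0) q k = RtoC 1.
Proof. rewrite qpoch_RtoC. induction k; simpl; [reflexivity|]. 
  replace (rq 0 q k * (1 - 0 * q ^ k)) with (rq 0 q k) by ring. exact IHk. Qed.

Lemma map_seq_S {A} (f : nat -> A) m : map f (seq 0 (S m)) = f 0%nat :: map (fun j => f (S j)) (seq 0 m).
Proof. simpl. f_equal. rewrite <- seq_shift, map_map. reflexivity. Qed.

Lemma Ccv_qpoch_list (f : nat -> nat -> C) m q k :
  (forall j, (j < m)%nat -> Ccv (fun n => f n j) (RtoC 0)) ->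
  Ccv (fun n => qpoch_list (map (f n) (seq 0 m)) q k) (RtoC 1).
Proof.
  revert f. induction m as [|m IH]; intros f H.
  - unfold qpoch_list; simpl. apply Ccv_const.
  - unfold qpoch_list. eapply Ccv_ext_loc.
    { apply filter_forall. intros n. rewrite map_seq_S. reflexivity. }
    simpl.
    assert (A : Ccv (fun n => qpoch (f n 0%nat) q k) (RtoC 1)).
    { rewrite <- (qpoch_zero q k). apply Ccv_qpoch. apply H. lia. }
    assert (B := IH (fun n j => f n (S j)) ltac:(intros j Hj; apply H; lia)).
    assert (X := Ccv_mult _ _ _ _ A B). replace (Cmult (RtoC 1) (RtoC 1)) with (RtoC 1) in X by ring.
    exact X.
Qed.

Lemma Cmod_mult_R a t : Cmod (Cmult a (RtoC t)) = Cmod a * Rabs t.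
Proof. rewrite Cmod_mult, Cmod_R. reflexivity. Qed.

Lemma qpoch_upper x q k : 0 < q < 1 -> Cmod x <= 1 -> Cmod (qpoch x q k) <= 2 ^ k.
Proof.
  intros Hq Hx. induction k as [|k IH]; simpl.
  - rewrite Cmod_1; lra.
  - rewrite Cmod_mult, (Rmult_comm 2). apply Rmult_le_compat; [apply Cmod_ge0|apply Cmod_ge0| |].
    + exact IH.
    + unfold Cminus. eapply Rle_trans; [apply Cmod_triangle|]. rewrite Cmod_opp, Cmod_1, Cmod_mult_R.
      rewrite Rabs_pos_eq by (apply pow_le; lra).
      assert (q ^ k <= 1) by (apply pow_le1; lra). assert (0 <= q^k) by (apply pow_le; lra).
      assert (0 <= Cmod x) by apply Cmod_ge0. nra.
Qed.

Lemma qpoch_lower x q k : 0 < q < 1 -> Cmod x <= / 2 -> (/ 2) ^ k <= Cmod (qpoch x q k).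
Proof.
  intros Hq Hx. induction k as [|k IH]; simpl.
  - rewrite Cmod_1; lra.
  - rewrite Cmod_mult. rewrite (Rmult_comm (/2)). apply Rmult_le_compat; [apply pow_le; lra|lra|exact IH|].
    assert (H1 : Cmod (RtoC 1) <= Cmod (Cminus (RtoC 1) (Cmult x (RtoC (q ^ k)))) + Cmod (Cmult x (RtoC (q ^ k)))).
    { replace (RtoC 1) with (Cplus (Cminus (RtoC 1) (Cmult x (RtoC (q ^ k)))) (Cmult x (RtoC (q ^ k)))) at 1 by ring.
      apply Cmod_triangle. }
    rewrite Cmod_1, Cmod_mult_R in H1. rewrite Rabs_pos_eq in H1 by (apply pow_le; lra).
    assert (q ^ k <= 1) by (apply pow_le1; lra). assert (0 <= q^k) by (apply pow_le; lra).
    assert (0 <= Cmod x) by apply Cmod_ge0. nra.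
Qed.

Lemma qpoch_list_upper l q k : 0 < q < 1 -> (forall x, In x l -> Cmod x <= 1) ->
  Cmod (qpoch_list l q k) <= (2 ^ k) ^ (length l).
Proof.
  intros Hq. induction l as [|x l IH]; intros H; unfold qpoch_list in *; simpl.
  - rewrite Cmod_1; lra.
  - rewrite Cmod_mult. apply Rmult_le_compat; [apply Cmod_ge0|apply Cmod_ge0| |].
    + apply qpoch_upper; [exact Hq|apply H; now left].
    + apply IH. intros y Hy; apply H; now right.
Qed.

Lemma qpoch_list_lower l q k : 0 < q < 1 -> (forall x, In x l -> Cmod x <= / 2) ->
  ((/ 2) ^ k) ^ (length l) <= Cmod (qpoch_list l q k).
Proof.
  intros Hq. induction l as [|x l IH]; intros H; unfold qpoch_list in *; simpl.
  - rewrite Cmod_1; lra.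
  - rewrite Cmod_mult. apply Rmult_le_compat; [apply pow_le; lra|apply pow_le; apply pow_le; lra| |].
    + apply qpoch_lower; [exact Hq|apply H; now left].
    + apply IH. intros y Hy; apply H; now right.
Qed.

Lemma Cmod_qpow q w : Cmod (qpow q w) = exp (Re w * ln q).
Proof.
  unfold qpow, Cmod; simpl. set (e := exp (Re w * ln q)). set (t := Im w * ln q).
  replace (e * cos t * (e * cos t * 1) + e * sin t * (e * sin t * 1)) with (e * e * (Rsqr (sin t) + Rsqr (cos t))) by (unfold Rsqr; ring).
  rewrite sin2_cos2, Rmult_1_r. apply sqrt_square. unfold e; left; apply exp_pos.
Qed.

Lemma qpow_RtoC q x : qpow q (RtoC x) = RtoC (exp (x * ln q)).
Proof.
  unfold qpow, RtoC; simpl. rewrite Rmult_0_l, cos_0, sin_0. f_equal; ring.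
Qed.

Lemma ln_q_neg q : 0 < q < 1 -> ln q < 0.
Proof. intros Hq. rewrite <- ln_1. apply ln_increasing; lra. Qed.

Lemma lim_exp_lin q a B : 0 < q < 1 -> 0 < a -> is_lim_seq (fun n => exp ((a * INR n + B) * ln q)) 0.
Proof.
  intros Hq Ha. assert (Hl := ln_q_neg q Hq).
  eapply is_lim_seq_ext.
  { intros n. instantiate (1 := fun n => exp (B * ln q) * (exp (a * ln q)) ^ n). simpl.
    rewrite <- Rpower_pow by apply exp_pos. unfold Rpower. rewrite ln_exp, <- exp_plus. f_equal. ring. }
  replace 0 with (exp (B * ln q) * 0) by ring. apply is_lim_seq_mult'; [apply is_lim_seq_const|].
  apply is_lim_seq_geom. rewrite Rabs_pos_eq by (left; apply exp_pos).
  rewrite <- exp_0. apply exp_increasing. nra.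
Qed.

Lemma Ccv_qpow_lin q a b : 0 < q < 1 -> 0 < a ->
  Ccv (fun n => qpow q (Cplus (RtoC (a * INR n)) b)) (RtoC 0).
Proof.
  intros Hq Ha. unfold Ccv. eapply is_lim_seq_ext; [|apply (lim_exp_lin q a (Re b) Hq Ha)].
  intros n. replace (Cminus (qpow q (Cplus (RtoC (a * INR n)) b)) (RtoC 0)) with (qpow q (Cplus (RtoC (a * INR n)) b)) by ring.
  rewrite Cmod_qpow. reflexivity.
Qed.


Fixpoint Pf (x q : R) (k : nat) : R :=
  match k with O => 1 | S k' => Pf x q k' * (x - q ^ k') end.

Lemma rq_Pf x q k : x <> 0 -> rq (/ x) q k * x ^ k = Pf x q k.
Proof. intros Hx. induction k as [|k IH]; simpl; [ring|]. rewrite <- IH. field. exact Hx. Qed.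

Lemma Pf_lim q k (u : nat -> R) : is_lim_seq u 0 -> is_lim_seq (fun n => Pf (u n) q k) (Pf 0 q k).
Proof.
  intros H. induction k as [|k IH]; simpl; [apply is_lim_seq_const|].
  apply is_lim_seq_mult'; [exact IH|]. apply is_lim_seq_minus'; [exact H|apply is_lim_seq_const].
Qed.

Lemma binom2_S k : binom2 (S k) = (binom2 k + k)%nat.
Proof.
  unfold binom2. replace (S k * (S k - 1))%nat with (k * (k - 1) + k * 2)%nat.
  - apply Nat.div_add. lia.
  - destruct k; simpl; [reflexivity|]. rewrite Nat.sub_0_r. nia.
Qed.

Lemma Pf_0 q k : Pf 0 q k = (-1) ^ k * q ^ binom2 k.
Proof. induction k as [|k IH]; simpl; [unfold binom2; simpl; ring|]. rewrite IH, binom2_S, pow_add. ring. Qed.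

Lemma Pf_zero_after q n k : (n < k)%nat -> Pf (q ^ n) q k = 0.
Proof.
  intros H. induction k as [|k IH]; [lia|]. simpl.
  destruct (Nat.eq_dec n k) as [->|Hne].
  - rewrite Rminus_diag. ring.
  - rewrite IH by lia. ring.
Qed.

Lemma Pf_bound q n k : 0 < q < 1 -> Rabs (Pf (q ^ n) q k) <= q ^ binom2 k.
Proof.
  intros Hq. destruct (Nat.lt_ge_cases n k) as [H|H].
  - rewrite Pf_zero_after by exact H. rewrite Rabs_R0. apply pow_le; lra.
  - induction k as [|k IH]; simpl.
    + rewrite Rabs_R1. unfold binom2; simpl. lra.
    + rewrite binom2_S, pow_add, Rabs_mult. apply Rmult_le_compat; try apply Rabs_pos.
      * apply IH. lia.
      * assert (q ^ n <= q ^ k).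
        { replace n with (k + (n - k))%nat by lia. rewrite pow_add.
          assert (0 <= q ^ k) by (apply pow_le; lra). assert (q ^ (n - k) <= 1) by (apply pow_le1; lra).
          assert (0 <= q ^ (n-k)) by (apply pow_le; lra). nra. }
        assert (0 <= q ^ n) by (apply pow_le; lra).
        rewrite Rabs_left1 by lra. lra.
Qed.

Lemma rprod_S m f : rprod (S m) f = f 0%nat * rprod m (fun j => f (S j)).
Proof. unfold rprod. rewrite map_seq_S. reflexivity. Qed.

Lemma rprod_lim m (f : nat -> nat -> R) (g : nat -> R) :
  (forall j, (j < m)%nat -> is_lim_seq (fun n => f n j) (g j)) ->
  is_lim_seq (fun n => rprod m (f n)) (rprod m g).
Proof.
  revert f g. induction m as [|m IH]; intros f g H.
  - unfold rprod; simpl. apply is_lim_seq_const.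
  - rewrite rprod_S. apply is_lim_seq_ext with (u := fun n => f n 0%nat * rprod m (fun j => f n (S j))).
    { intros n. rewrite rprod_S. reflexivity. }
    apply is_lim_seq_mult'. { apply H. lia. }
    apply (IH (fun n j => f n (S j)) (fun j => g (S j))). intros j Hj. apply H. lia.
Qed.

Lemma rprod_ext m f g : (forall j, (j < m)%nat -> f j = g j) -> rprod m f = rprod m g.
Proof.
  revert f g. induction m as [|m IH]; intros f g H; [reflexivity|].
  rewrite !rprod_S. rewrite (H 0%nat) by lia. f_equal. apply IH. intros j Hj; apply H; lia.
Qed.

Lemma rprod_mult m f g : rprod m (fun j => f j * g j) = rprod m f * rprod m g.
Proof.
  revert f g. induction m as [|m IH]; intros f g; [unfold rprod; simpl; ring|].
  rewrite !rprod_S, IH. ring.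
Qed.

Lemma rprod_inv m f : rprod m (fun j => / f j) = / rprod m f.
Proof.
  revert f. induction m as [|m IH]; intros f; [unfold rprod; simpl; now rewrite Rinv_1|].
  rewrite !rprod_S, IH, Rinv_mult. reflexivity.
Qed.

Lemma rprod_const m c : rprod m (fun _ => c) = c ^ m.
Proof. induction m as [|m IH]; [reflexivity|]. rewrite rprod_S, IH. reflexivity. Qed.

Lemma rprod_pos m f : (forall j, (j < m)%nat -> 0 < f j) -> 0 < rprod m f.
Proof.
  revert f. induction m as [|m IH]; intros f H; [unfold rprod; simpl; lra|].
  rewrite rprod_S. apply Rmult_lt_0_compat; [apply H; lia|]. apply IH. intros j Hj; apply H; lia.
Qed.

Lemma Rpower_lt1 q c : 0 < q < 1 -> 0 < c -> 0 < Rpower q c < 1.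
Proof.
  intros Hq Hc. unfold Rpower. split; [apply exp_pos|]. rewrite <- exp_0. apply exp_increasing.
  assert (ln q < 0) by (apply ln_q_neg; exact Hq). nra.
Qed.

Lemma qnum_lim q c : 0 < q < 1 -> 0 < c ->
  is_lim_seq (fun n => qnum (Rpower q c) (INR n)) (/ (1 - Rpower q c)).
Proof.
  intros Hq Hc. assert (H1 := Rpower_lt1 q c Hq Hc).
  eapply is_lim_seq_ext.
  { intros n. instantiate (1 := fun n => (1 - exp ((c * INR n + 0) * ln q)) * / (1 - Rpower q c)). simpl.
    unfold qnum, Rdiv. f_equal. f_equal. rewrite Rpower_mult. unfold Rpower. f_equal. ring. }
  assert (X : is_lim_seq (fun n => (1 - exp ((c * INR n + 0) * ln q)) * / (1 - Rpower q c)) ((1 - 0) * / (1 - Rpower q c))).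
  { apply is_lim_seq_mult'; [|apply is_lim_seq_const].
    apply is_lim_seq_minus'; [apply is_lim_seq_const|]. apply lim_exp_lin; assumption. }
  replace ((1 - 0) * / (1 - Rpower q c)) with (/ (1 - Rpower q c)) in X by ring. exact X.
Qed.

Lemma powerRZ_mulnat x a k : x <> 0 -> powerRZ x (a * Z.of_nat k) = powerRZ x a ^ k.
Proof.
  intros Hx. induction k as [|k IH].
  - simpl. rewrite Z.mul_0_r. reflexivity.
  - rewrite Nat2Z.inj_succ, Z.mul_succ_r, powerRZ_add by exact Hx. rewrite IH. simpl. ring.
Qed.

Lemma powerRZ_m1_sq e : powerRZ (-1) e * powerRZ (-1) e = 1.
Proof. rewrite <- powerRZ_mult. replace (-1 * -1) with 1 by ring. apply powerRZ_R1. Qed.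

Lemma powerRZ_m1_abs e : Rabs (powerRZ (-1) e) = 1.
Proof.
  assert (H := powerRZ_m1_sq e). assert (Rabs (powerRZ (-1) e) * Rabs (powerRZ (-1) e) = 1).
  { rewrite <- Rabs_mult, H. apply Rabs_R1. }
  assert (0 <= Rabs (powerRZ (-1) e)) by apply Rabs_pos. nra.
Qed.

Lemma powerRZ_m1_shift e m : powerRZ (-1) (e + 2 * m) = powerRZ (-1) e.
Proof.
  rewrite powerRZ_add by lra. replace (2 * m)%Z with (m + m)%Z by ring.
  rewrite powerRZ_add by lra. rewrite powerRZ_m1_sq. ring.
Qed.

Lemma powerRZ_le1 q e : 0 < q < 1 -> (0 <= e)%Z -> 0 <= powerRZ q e <= 1.
Proof.
  intros Hq He. rewrite <- (Z2Nat.id e He), <- pow_powerRZ. split; [apply pow_le; lra|apply pow_le1; lra].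
Qed.


Lemma ex_series_bound (a M : nat -> R) : (forall k, Rabs (a k) <= M k) -> ex_series M -> ex_series a.
Proof.
  intros H HM. apply ex_series_Rabs. apply (ex_series_le (fun k => Rabs (a k)) M); [|exact HM].
  intros k. unfold norm; simpl. unfold abs; simpl. rewrite Rabs_Rabsolu. apply H.
Qed.

Lemma sum_lim (h : nat -> nat -> R) (g : nat -> R) K :
  (forall k, is_lim_seq (fun n => h n k) (g k)) -> is_lim_seq (fun n => sum_f_R0 (h n) K) (sum_f_R0 g K).
Proof.
  intros H. induction K as [|K IH]; simpl; [apply H|]. apply is_lim_seq_plus'; [exact IH|apply H].
Qed.

Lemma tail_small (M : nat -> R) : ex_series M -> forall eps, 0 < eps ->
  exists K0, Series (fun k => M (S K0 + k)%nat) = Series M - sum_f_R0 M K0 /\ Rabs (Series M - sum_f_R0 M K0) < eps.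
Proof.
  intros HM eps He. assert (Hs := Series_correct _ HM).
  assert (Hl : is_lim_seq (sum_n M) (Series M)) by exact Hs.
  apply is_lim_seq_spec in Hl. destruct (Hl (mkposreal eps He)) as [K0 HK].
  exists K0. split.
  - rewrite (Series_incr_n M (S K0)) by (lia || exact HM). simpl. ring.
  - specialize (HK K0 (le_n _)). rewrite sum_n_Reals in HK. rewrite Rabs_minus_sym. exact HK.
Qed.

Lemma tannery (f : nat -> nat -> R) (g : nat -> R) (M : nat -> R) N :
  (forall k, is_lim_seq (fun n => f n k) (g k)) ->
  (forall n k, (N <= n)%nat -> Rabs (f n k) <= M k) ->
  ex_series M ->
  ex_series g /\ (forall n, (N <= n)%nat -> ex_series (f n)) /\
  is_lim_seq (fun n => Series (f n)) (Series g).
Proof.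
  intros Hlim Hb HM.
  assert (Hg : forall k, Rabs (g k) <= M k).
  { intros k. assert (X := is_lim_seq_le_loc (fun n => Rabs (f n k)) (fun _ => M k) (Rabs (g k)) (M k)).
    apply X.
    - exists N. intros n Hn. apply Hb. exact Hn.
    - apply (is_lim_seq_abs _ (g k)). apply Hlim.
    - apply is_lim_seq_const. }
  assert (Hgs : ex_series g) by (apply (ex_series_bound g M Hg HM)).
  assert (Hfs : forall n, (N <= n)%nat -> ex_series (f n)).
  { intros n Hn. apply (ex_series_bound (f n) M); [intros k; apply Hb; exact Hn|exact HM]. }
  split; [exact Hgs|split; [exact Hfs|]].
  apply is_lim_seq_spec. intros eps.
  destruct (tail_small M HM (eps / 4) ltac:(destruct eps; simpl; lra)) as [K0 [HT1 HT2]].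
  assert (Htail : forall a : nat -> R, ex_series a -> (forall k, Rabs (a k) <= M k) ->
     Rabs (Series (fun k => a (S K0 + k)%nat)) <= eps / 4).
  { intros a Ha Hab.
    assert (Ht : ex_series (fun k => M (S K0 + k)%nat)) by (apply ex_series_incr_n; exact HM).
    eapply Rle_trans; [apply Series_Rabs|].
    - apply (ex_series_bound _ (fun k => M (S K0 + k)%nat)); [|exact Ht].
      intros k. rewrite Rabs_Rabsolu. apply Hab.
    - eapply Rle_trans; [apply Series_le|].
      + intros k. split; [apply Rabs_pos|apply Hab].
      + exact Ht.
      + rewrite HT1. apply Rle_trans with (1 := Rle_abs _). lra. }
  assert (Hsum := sum_lim f g K0 Hlim). apply is_lim_seq_spec in Hsum.
  destruct (Hsum (mkposreal (eps / 2) ltac:(destruct eps; simpl; lra))) as [N1 HN1].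
  exists (max N N1). intros n Hn.
  assert (HnN : (N <= n)%nat) by lia. specialize (HN1 n ltac:(lia)). simpl in HN1.
  rewrite (Series_incr_n (f n) (S K0)) by (lia || exact (Hfs n HnN)).
  rewrite (Series_incr_n g (S K0)) by (lia || exact Hgs). simpl.
  assert (A1 := Htail (f n) (Hfs n HnN) (fun k => Hb n k HnN)).
  assert (A2 := Htail g Hgs Hg). simpl in A1, A2.
  set (x := sum_f_R0 (f n) K0) in *. set (y := sum_f_R0 g K0) in *.
  set (u := Series (fun k => f n (S (K0 + k)))) in *. set (v := Series (fun k => g (S (K0 + k)))) in *.
  replace (x + u - (y + v)) with ((x - y) + (u - v)) by ring.
  eapply Rle_lt_trans; [apply Rabs_triang|].
  assert (Rabs (u - v) <= Rabs u + Rabs v) by (unfold Rminus; eapply Rle_trans; [apply Rabs_triang|]; rewrite Rabs_Ropp; lra).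
  destruct eps; simpl in *. lra.
Qed.


Lemma Cinv_0 : Cinv (RtoC 0) = RtoC 0.
Proof. unfold Cinv, RtoC; simpl. f_equal; rewrite ?Rmult_0_l, ?Rplus_0_r; unfold Rdiv; try rewrite Ropp_0; ring. Qed.

Lemma Cinv_mult_C a b : Cinv (Cmult a b) = Cmult (Cinv a) (Cinv b).
Proof.
  destruct (Ceq_dec a (RtoC 0)) as [->|Ha].
  { rewrite Cmult_0_l, Cinv_0. ring. }
  destruct (Ceq_dec b (RtoC 0)) as [->|Hb].
  { rewrite Cmult_0_r, Cinv_0. ring. }
  field. split; assumption.
Qed.

Lemma pow_n_mult (x y : C) k : pow_n (Cmult x y) k = Cmult (pow_n x k) (pow_n y k).
Proof. induction k as [|k IH]; simpl. - change (one : C) with (RtoC 1). ring.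
  - rewrite IH. change (@mult C_Ring) with Cmult. ring. Qed.

Lemma pow_n_RtoC x k : pow_n (RtoC x) k = RtoC (x ^ k).
Proof. induction k as [|k IH]; simpl; [reflexivity|]. rewrite IH. change (@mult C_Ring) with Cmult.
  rewrite RtoC_mult. reflexivity. Qed.

Lemma Cmod_pow_n x k : Cmod (pow_n x k) = Cmod x ^ k.
Proof. induction k as [|k IH]; simpl; [apply Cmod_1|]. change (@mult C_Ring) with Cmult.
  rewrite Cmod_mult, IH. reflexivity. Qed.

Lemma Re_sum_n (u : nat -> C) N : Re (sum_n u N) = sum_n (fun k => Re (u k)) N.
Proof. induction N as [|N IH]; [rewrite !sum_O; reflexivity|]. rewrite !sum_Sn, <- IH. reflexivity. Qed.

Lemma Im_sum_n (u : nat -> C) N : Im (sum_n u N) = sum_n (fun k => Im (u k)) N.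
Proof. induction N as [|N IH]; [rewrite !sum_O; reflexivity|]. rewrite !sum_Sn, <- IH. reflexivity. Qed.

Lemma rq_nonzero x q k : (forall j, x * q ^ j <> 1) -> rq x q k <> 0.
Proof.
  intros H. induction k as [|k IH]; simpl; [lra|]. apply Rmult_integral_contrapositive. split; [exact IH|].
  specialize (H k). lra.
Qed.

Lemma Rpower_eq1 q x : 0 < q < 1 -> Rpower q x = 1 -> x = 0.
Proof.
  intros Hq H. unfold Rpower in H. rewrite <- exp_0 in H. apply exp_inv in H.
  assert (ln q < 0) by (apply ln_q_neg; exact Hq).
  apply Rmult_integral in H. destruct H; [assumption|lra].
Qed.

Lemma rq_alpha_nonzero q alpha k : 0 < q < 1 -> (forall m : nat, alpha <> - INR m) ->
  rq (Rpower q alpha) q k <> 0.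
Proof.
  intros Hq Ha. apply rq_nonzero. intros j E.
  rewrite <- Rpower_pow in E by lra. rewrite <- Rpower_plus in E. apply Rpower_eq1 in E; [|exact Hq].
  apply (Ha j). lra.
Qed.

Lemma rq_q_nonzero q k : 0 < q < 1 -> rq q q k <> 0.
Proof.
  intros Hq. apply rq_nonzero. intros j E.
  assert (q ^ S j < 1). { simpl. assert (q ^ j <= 1) by (apply pow_le1; lra). assert (0 <= q^j) by (apply pow_le; lra). nra. }
  simpl in *. lra.
Qed.

Lemma pow_lim (u : nat -> R) (l : R) k : is_lim_seq u l -> is_lim_seq (fun n => u n ^ k) (l ^ k).
Proof. intros H. induction k as [|k IH]; simpl; [apply is_lim_seq_const|]. apply is_lim_seq_mult'; assumption. Qed.

Lemma ev_and_fin (P : nat -> nat -> Prop) m : (forall j, (j < m)%nat -> eventually (P j)) ->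
  eventually (fun n => forall j, (j < m)%nat -> P j n).
Proof.
  induction m as [|m IH]; intros H.
  - apply filter_forall. intros n j Hj; lia.
  - assert (H1 := IH (fun j Hj => H j ltac:(lia))). assert (H2 := H m ltac:(lia)).
    eapply filter_imp; [|exact (filter_and _ _ H1 H2)]. intros n [A B] j Hj.
    destruct (Nat.eq_dec j m) as [->|Hne]; [exact B|apply A; lia].
Qed.


Theorem proposition4 (q : R) (r s : nat) (alpha : R)
  (a c : nat -> R) (b d : nat -> C) (z : C) :
  0 < q < 1 ->
  (1 <= r)%nat -> (1 <= s)%nat -> (r - 1 <= s)%nat ->
  (forall m : nat, alpha <> - INR m) ->
  (forall j, (j < r - 1)%nat -> 0 < a j) ->
  (forall l, (l < s - 1)%nat -> 0 < c l) ->
  (forall j n m : nat, (j < r - 1)%nat -> (1 <= n)%nat ->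
     a j * INR n + Re (b j) <> - INR m) ->
  (forall l n m : nat, (l < s - 1)%nat -> (1 <= n)%nat ->
     c l * INR n + Re (d l) <> - INR m) ->
  let A := rprod (r - 1) (fun j => qnum q (a j)) / rprod (s - 1) (fun l => qnum q (c l)) in
  let lambda (n : nat) : R :=
    Rpower q (INR n + alpha) * rprod (s - 1) (fun l => qnum (Rpower q (c l)) (INR n))
    / (qnum q (INR n) * rprod (r - 1) (fun j => qnum (Rpower q (a j)) (INR n)))
    * (q - 1) in
  let phi_n (n : nat) : C :=
    rphis
      (qpow q (RtoC (- INR n)) ::
         map (fun j => qpow q (Cplus (RtoC (a j * INR n)) (b j))) (seq 0 (r - 1)))
      (qpow q (RtoC alpha) ::
         map (fun l => qpow q (Cplus (RtoC (c l * INR n)) (d l))) (seq 0 (s - 1)))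
      q (Cmult (RtoC (lambda n)) z) in
  let rhs_term (k : nat) : C :=
    Cmult (RtoC (powerRZ (-1) ((1 + Z.of_nat r - Z.of_nat s) * Z.of_nat k)%Z
                 * powerRZ q ((2 + Z.of_nat s - Z.of_nat r) * Z.of_nat (binom2 k))%Z
                 * A ^ k))
      (Cdiv (Cmult (pow_n z k)
                   (RtoC (Rpower q (alpha * INR k)
                          * powerRZ (1 - q) ((2 + Z.of_nat r - Z.of_nat s) * Z.of_nat k)%Z)))
            (Cmult (qpoch (qpow q (RtoC alpha)) q k) (qpoch (RtoC q) q k))) in
  exists L : C, is_series rhs_term L /\ filterlim phi_n eventually (locally L).
Proof.
  intros Hq Hr Hs Hrs Hal Ha Hc Hab Hcd A lambda phi_n rhs_term.
  set (m1 := (r - 1)%nat) in *. set (m2 := (s - 1)%nat) in *.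
  assert (Hr' : Z.of_nat r = (Z.of_nat m1 + 1)%Z) by (unfold m1; lia).
  assert (Hs' : Z.of_nat s = (Z.of_nat m2 + 1)%Z) by (unfold m2; lia).
  assert (Hq1 : 0 < 1 - q) by lra.
  set (qa := Rpower q alpha).
  assert (Hqa : 0 < qa) by (unfold qa, Rpower; apply exp_pos).
  set (lam' := fun n : nat => qa * rprod m2 (fun l => qnum (Rpower q (c l)) (INR n))
    / (qnum q (INR n) * rprod m1 (fun j => qnum (Rpower q (a j)) (INR n))) * (q - 1)).
  assert (Hlam : forall n, lambda n = lam' n * q ^ n).
  { intros n. unfold lambda, lam'. rewrite Rpower_plus, Rpower_pow by lra. fold qa. unfold Rdiv. ring. }
  set (Pa := rprod m1 (fun j => 1 - Rpower q (a j))).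
  set (Pc := rprod m2 (fun l => 1 - Rpower q (c l))).
  assert (HPa : 0 < Pa) by (apply rprod_pos; intros j Hj; assert (X := Rpower_lt1 q (a j) Hq (Ha j Hj)); lra).
  assert (HPc : 0 < Pc) by (apply rprod_pos; intros j Hj; assert (X := Rpower_lt1 q (c j) Hq (Hc j Hj)); lra).
  set (Lam := qa * / Pc / (/ (1 - q) * / Pa) * (q - 1)).
  assert (Hlamlim : is_lim_seq lam' Lam).
  { unfold lam', Lam.
    apply is_lim_seq_mult'; [|apply is_lim_seq_const].
    apply is_lim_seq_div'.
    - apply is_lim_seq_mult'; [apply is_lim_seq_const|]. unfold Pc. rewrite <- rprod_inv.
      apply rprod_lim. intros l Hl. apply qnum_lim; [exact Hq|apply Hc; exact Hl].
    - apply is_lim_seq_mult'.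
      + assert (X := qnum_lim q 1 Hq ltac:(lra)). rewrite Rpower_1 in X by lra. exact X.
      + unfold Pa. rewrite <- rprod_inv. apply rprod_lim. intros j Hj. apply qnum_lim; [exact Hq|apply Ha; exact Hj].
    - apply Rgt_not_eq. apply Rmult_lt_0_compat; apply Rinv_0_lt_compat; lra. }
  assert (HA : A = Pa * (/ (1 - q)) ^ m1 / (Pc * (/ (1 - q)) ^ m2)).
  { unfold A. f_equal; [|f_equal]; unfold Pa, Pc; rewrite <- rprod_const, <- rprod_mult; apply rprod_ext; intros; unfold qnum; reflexivity. }
  assert (HLam : Lam = - qa * A * powerRZ (1 - q) (2 + Z.of_nat r - Z.of_nat s)).
  { rewrite HA, Hr', Hs'. unfold Lam.
    replace (2 + (Z.of_nat m1 + 1) - (Z.of_nat m2 + 1))%Z with (Z.of_nat (2 + m1) + - Z.of_nat m2)%Z by lia.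
    rewrite powerRZ_add, powerRZ_neg', <- !pow_powerRZ by lra. rewrite !pow_add. rewrite !pow_inv. 
    field. repeat split; try lra; apply pow_nonzero; lra. }
  set (numrest := fun n : nat => map (fun j => qpow q (Cplus (RtoC (a j * INR n)) (b j))) (seq 0 m1)).
  set (denrest := fun n : nat => map (fun l => qpow q (Cplus (RtoC (c l * INR n)) (d l))) (seq 0 m2)).
  set (T := fun n k => phi_term (qpow q (RtoC (- INR n)) :: numrest n) (qpow q (RtoC alpha) :: denrest n) q (Cmult (RtoC (lambda n)) z) k).
  set (Y := fun n k => Cmult (qpoch_list (numrest n) q k) (Cinv (qpoch_list (denrest n) q k))).
  set (sg := fun k : nat => powerRZ (-1) ((1 + Z.of_nat s - Z.of_nat r) * Z.of_nat k) * powerRZ q ((1 + Z.of_nat s - Z.of_nat r) * Z.of_nat (binom2 k))).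
  set (W := fun k => Cmult (Cmult (RtoC (sg k)) (pow_n z k)) (Cinv (Cmult (RtoC (rq qa q k)) (RtoC (rq q q k))))).
  assert (Hqpa : qpow q (RtoC alpha) = RtoC qa) by (rewrite qpow_RtoC; reflexivity).
  assert (HT : forall n k, T n k = Cmult (Cmult (RtoC (Pf (q ^ n) q k * lam' n ^ k)) (Y n k)) (W k)).
  { intros n k. unfold T, phi_term. cbv zeta.
    assert (L1 : length (qpow q (RtoC (- INR n)) :: numrest n) = r) by (simpl; unfold numrest; rewrite length_map, length_seq; unfold m1; lia).
    assert (L2 : length (qpow q (RtoC alpha) :: denrest n) = s) by (simpl; unfold denrest; rewrite length_map, length_seq; unfold m2; lia).
    rewrite L1, L2.
    change (qpoch_list (qpow q (RtoC (- INR n)) :: numrest n) q k) with (Cmult (qpoch (qpow q (RtoC (- INR n))) q k) (qpoch_list (numrest n) q k)).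
    change (qpoch_list (qpow q (RtoC alpha) :: denrest n) q k) with (Cmult (qpoch (qpow q (RtoC alpha)) q k) (qpoch_list (denrest n) q k)).
    rewrite Hqpa, qpow_RtoC, !qpoch_RtoC, pow_n_mult, pow_n_RtoC, Hlam.
    assert (Hqn : 0 < q ^ n) by (apply pow_lt; lra).
    replace (exp (- INR n * ln q)) with (/ q ^ n).
    2:{ rewrite <- Rpower_pow by lra. unfold Rpower. rewrite <- exp_Ropp. f_equal. ring. }
    rewrite <- (rq_Pf (q ^ n) q k) by lra. rewrite Rpow_mult_distr.
    unfold W, Y, sg, Cdiv. rewrite !Cinv_mult_C. rewrite !RtoC_mult. ring. }
  assert (Hpt : forall k, Ccv (fun n => T n k) (rhs_term k)).
  { intros k.
    eapply Ccv_ext_loc; [apply filter_forall; intros n; symmetry; apply HT|].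
    set (P := powerRZ (1 - q) (2 + Z.of_nat r - Z.of_nat s)).
    assert (E : powerRZ (-1) ((1 + Z.of_nat r - Z.of_nat s) * Z.of_nat k) * powerRZ q ((2 + Z.of_nat s - Z.of_nat r) * Z.of_nat (binom2 k)) * A ^ k
       * (Rpower q (alpha * INR k) * powerRZ (1 - q) ((2 + Z.of_nat r - Z.of_nat s) * Z.of_nat k))
       = (Pf 0 q k * Lam ^ k) * sg k).
    { rewrite Pf_0, HLam. unfold sg.
      replace ((1 + Z.of_nat r - Z.of_nat s) * Z.of_nat k)%Z with ((1 + Z.of_nat s - Z.of_nat r) * Z.of_nat k + 2 * ((Z.of_nat r - Z.of_nat s) * Z.of_nat k))%Z by ring.
      rewrite powerRZ_m1_shift.
      replace ((2 + Z.of_nat s - Z.of_nat r) * Z.of_nat (binom2 k))%Z with (Z.of_nat (binom2 k) + (1 + Z.of_nat s - Z.of_nat r) * Z.of_nat (binom2 k))%Z by ring.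
      rewrite powerRZ_add by lra. rewrite <- pow_powerRZ.
      rewrite <- Rpower_mult. fold qa. rewrite Rpower_pow by lra.
      rewrite (powerRZ_mulnat (1 - q)) by lra. fold P.
      replace (- qa * A * P) with ((-1) * (qa * A * P)) by ring. rewrite !Rpow_mult_distr.
      set (e1 := powerRZ (-1) ((1 + Z.of_nat s - Z.of_nat r) * Z.of_nat k)).
      set (e2 := powerRZ q ((1 + Z.of_nat s - Z.of_nat r) * Z.of_nat (binom2 k))).
      assert (Hu : (-1) ^ k * (-1) ^ k = 1).
      { rewrite <- Rpow_mult_distr. replace ((-1) * (-1)) with 1 by ring. apply pow1. }
      transitivity (((-1) ^ k * (-1) ^ k) * (q ^ binom2 k * (qa ^ k * A ^ k * P ^ k) * (e1 * e2))).
      + rewrite Hu. ring.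
      + ring. }
    assert (Hrhs : rhs_term k = Cmult (Cmult (RtoC (Pf 0 q k * Lam ^ k)) (RtoC 1)) (W k)).
    { transitivity (Cmult (Cmult (RtoC (powerRZ (-1) ((1 + Z.of_nat r - Z.of_nat s) * Z.of_nat k) * powerRZ q ((2 + Z.of_nat s - Z.of_nat r) * Z.of_nat (binom2 k)) * A ^ k
       * (Rpower q (alpha * INR k) * powerRZ (1 - q) ((2 + Z.of_nat r - Z.of_nat s) * Z.of_nat k)))) (pow_n z k))
        (Cinv (Cmult (RtoC (rq qa q k)) (RtoC (rq q q k))))).
      - unfold rhs_term, Cdiv. rewrite Hqpa, !qpoch_RtoC. rewrite !(RtoC_mult (_ * _)). ring.
      - rewrite E. unfold W. rewrite !RtoC_mult. ring. }
    rewrite Hrhs. apply Ccv_mult; [apply Ccv_mult|apply Ccv_const].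
    - apply Ccv_RtoC. apply is_lim_seq_mult'.
      + apply Pf_lim. apply is_lim_seq_geom. rewrite Rabs_pos_eq; lra.
      + apply pow_lim. exact Hlamlim.
    - unfold Y.
      assert (X1 : Ccv (fun n => qpoch_list (numrest n) q k) (RtoC 1)).
      { unfold numrest. apply (Ccv_qpoch_list (fun n j => qpow q (Cplus (RtoC (a j * INR n)) (b j)))).
        intros j Hj. apply Ccv_qpow_lin; [exact Hq|apply Ha; exact Hj]. }
      assert (X2 : Ccv (fun n => qpoch_list (denrest n) q k) (RtoC 1)).
      { unfold denrest. apply (Ccv_qpoch_list (fun n j => qpow q (Cplus (RtoC (c j * INR n)) (d j)))).
        intros j Hj. apply Ccv_qpow_lin; [exact Hq|apply Hc; exact Hj]. }
      assert (X3 := Ccv_inv _ _ X2 ltac:(intros E1; apply RtoC_inj in E1; lra)).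
      assert (X := Ccv_mult _ _ _ _ X1 X3).
      replace (Cmult (RtoC 1) (Cinv (RtoC 1))) with (RtoC 1) in X by (field; intros E1; apply RtoC_inj in E1; lra).
      exact X. }
  set (B1 := Rabs Lam + 1).
  set (C0 := B1 * 2 ^ m1 * 2 ^ m2 * (Cmod z + 1)).
  set (M := fun k => q ^ binom2 k * C0 ^ k / (Rabs (rq qa q k) * Rabs (rq q q k))).
  assert (Hrqa : forall k, rq qa q k <> 0) by (intros k; apply rq_alpha_nonzero; assumption).
  assert (Hrqq : forall k, rq q q k <> 0) by (intros k; apply rq_q_nonzero; assumption).
  assert (HB1 : 0 < B1) by (unfold B1; assert (X := Rabs_pos Lam); lra).
  assert (HC0 : 0 < C0).
  { unfold C0. assert (0 <= Cmod z) by apply Cmod_ge0. repeat apply Rmult_lt_0_compat; try lra; apply pow_lt; lra. }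
  assert (Hbound : exists N, forall n k, (N <= n)%nat -> Cmod (T n k) <= M k).
  { assert (E1 : eventually (fun n => Rabs (lam' n) <= B1)).
    { apply is_lim_seq_spec in Hlamlim. eapply filter_imp; [|exact (Hlamlim (mkposreal 1 Rlt_0_1))].
      intros n Hn. simpl in Hn. unfold B1.
      assert (X := Rabs_triang_inv (lam' n) Lam). lra. }
    assert (E2 : eventually (fun n => forall j, (j < m1)%nat -> Cmod (qpow q (Cplus (RtoC (a j * INR n)) (b j))) <= 1)).
    { apply (ev_and_fin (fun j n => Cmod (qpow q (Cplus (RtoC (a j * INR n)) (b j))) <= 1)).
      intros j Hj. assert (X := lim0_ev _ (Ccv_qpow_lin q (a j) (b j) Hq (Ha j Hj)) 1 Rlt_0_1).
      eapply filter_imp; [|exact X]. intros n Hn. cbv beta in Hn. rewrite Rabs_pos_eq in Hn by apply Cmod_ge0.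
      replace (Cminus (qpow q (Cplus (RtoC (a j * INR n)) (b j))) (RtoC 0)) with (qpow q (Cplus (RtoC (a j * INR n)) (b j))) in Hn by ring. lra. }
    assert (E3 : eventually (fun n => forall j, (j < m2)%nat -> Cmod (qpow q (Cplus (RtoC (c j * INR n)) (d j))) <= / 2)).
    { apply (ev_and_fin (fun j n => Cmod (qpow q (Cplus (RtoC (c j * INR n)) (d j))) <= / 2)).
      intros j Hj. assert (X := lim0_ev _ (Ccv_qpow_lin q (c j) (d j) Hq (Hc j Hj)) (/ 2) ltac:(lra)).
      eapply filter_imp; [|exact X]. intros n Hn. cbv beta in Hn. rewrite Rabs_pos_eq in Hn by apply Cmod_ge0.
      replace (Cminus (qpow q (Cplus (RtoC (c j * INR n)) (d j))) (RtoC 0)) with (qpow q (Cplus (RtoC (c j * INR n)) (d j))) in Hn by ring. lra. }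
    destruct (filter_and _ _ E1 (filter_and _ _ E2 E3)) as [N HN].
    exists N. intros n k Hn. destruct (HN n Hn) as [F1 [F2 F3]].
    rewrite HT. unfold Y. rewrite !Cmod_mult, Cmod_R.
    assert (Hnum : Cmod (qpoch_list (numrest n) q k) <= (2 ^ k) ^ m1).
    { assert (Lm : length (numrest n) = m1) by (unfold numrest; rewrite length_map, length_seq; reflexivity).
      rewrite <- Lm.
      apply qpoch_list_upper; [exact Hq|]. intros x Hx. unfold numrest in Hx. apply in_map_iff in Hx.
      destruct Hx as [j [<- Hj]]. apply in_seq in Hj. apply F2. lia. }
    assert (Hden : ((/ 2) ^ k) ^ m2 <= Cmod (qpoch_list (denrest n) q k)).
    { assert (Lm : length (denrest n) = m2) by (unfold denrest; rewrite length_map, length_seq; reflexivity).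
      rewrite <- Lm.
      apply qpoch_list_lower; [exact Hq|]. intros x Hx. unfold denrest in Hx. apply in_map_iff in Hx.
      destruct Hx as [j [<- Hj]]. apply in_seq in Hj. apply F3. lia. }
    assert (Hdp : 0 < ((/ 2) ^ k) ^ m2) by (apply pow_lt; apply pow_lt; lra).
    assert (Hden0 : qpoch_list (denrest n) q k <> RtoC 0).
    { intros E. rewrite E, Cmod_0 in Hden. lra. }
    rewrite Cmod_inv by exact Hden0.
    assert (HW : Cmod (W k) <= (Cmod z + 1) ^ k * / (Rabs (rq qa q k) * Rabs (rq q q k))).
    { unfold W. rewrite !Cmod_mult, Cmod_R, Cmod_pow_n, Cmod_inv, Cmod_mult, !Cmod_R.
      2:{ rewrite <- RtoC_mult. intros E. apply RtoC_inj in E. apply Rmult_integral in E.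
          destruct E; [apply (Hrqa k)|apply (Hrqq k)]; assumption. }
      assert (Hsg : Rabs (sg k) <= 1).
      { unfold sg. rewrite Rabs_mult, powerRZ_m1_abs, Rmult_1_l.
        assert (X := powerRZ_le1 q ((1 + Z.of_nat s - Z.of_nat r) * Z.of_nat (binom2 k)) Hq ltac:(apply Z.mul_nonneg_nonneg; lia)).
        rewrite Rabs_pos_eq; lra. }
      assert (0 < / (Rabs (rq qa q k) * Rabs (rq q q k))).
      { apply Rinv_0_lt_compat. apply Rmult_lt_0_compat; apply Rabs_pos_lt; auto. }
      apply Rmult_le_compat_r; [lra|].
      rewrite <- (Rmult_1_l ((Cmod z + 1) ^ k)). apply Rmult_le_compat; try apply Rabs_pos; [apply pow_le, Cmod_ge0|exact Hsg|].
      apply pow_incr. split; [apply Cmod_ge0|lra]. }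
    assert (HX : Rabs (Pf (q ^ n) q k * lam' n ^ k) <= q ^ binom2 k * B1 ^ k).
    { rewrite Rabs_mult, <- RPow_abs. apply Rmult_le_compat; try apply Rabs_pos; [apply pow_le, Rabs_pos|apply Pf_bound; exact Hq|].
      apply pow_incr. split; [apply Rabs_pos|exact F1]. }
    assert (HY : Cmod (qpoch_list (numrest n) q k) * / Cmod (qpoch_list (denrest n) q k) <= (2 ^ k) ^ m1 * / ((/ 2) ^ k) ^ m2).
    { apply Rmult_le_compat; [apply Cmod_ge0|left; apply Rinv_0_lt_compat; lra|exact Hnum|].
      apply Rinv_le_contravar; assumption. }
    eapply Rle_trans.
    { apply Rmult_le_compat; [apply Rmult_le_pos; [apply Rabs_pos|apply Rmult_le_pos; [apply Cmod_ge0|left; apply Rinv_0_lt_compat; lra]]|apply Cmod_ge0| |exact HW].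
      apply Rmult_le_compat; [apply Rabs_pos|apply Rmult_le_pos; [apply Cmod_ge0|left; apply Rinv_0_lt_compat; lra]|exact HX|exact HY]. }
    right. unfold M, C0. rewrite !Rpow_mult_distr. rewrite <- !pow_inv, Rinv_inv, <- !pow_mult.
    rewrite (Nat.mul_comm k m1), (Nat.mul_comm k m2). unfold Rdiv. ring. }
  assert (HMpos : forall k, 0 < M k).
  { intros k. unfold M. apply Rmult_lt_0_compat; [apply Rmult_lt_0_compat; apply pow_lt; lra|].
    apply Rinv_0_lt_compat. apply Rmult_lt_0_compat; apply Rabs_pos_lt; auto. }
  assert (HM : ex_series M).
  { apply ex_series_Rabs. apply (ex_series_DAlembert M 0); [lra|intros k; apply Rgt_not_eq, HMpos|].
    assert (Hfa : forall k, 1 - qa * q ^ k <> 0).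
    { intros k E. apply (Hrqa (S k)). simpl. rewrite E. ring. }
    assert (Hfq : forall k, 1 - q * q ^ k <> 0).
    { intros k E. apply (Hrqq (S k)). simpl. rewrite E. ring. }
    apply is_lim_seq_ext with (u := fun k => C0 * q ^ k / (Rabs (1 - qa * q ^ k) * Rabs (1 - q * q ^ k))).
    { intros k. rewrite (Rabs_pos_eq (M (S k) / M k)) by (left; apply Rdiv_lt_0_compat; apply HMpos).
      unfold M. simpl rq. rewrite binom2_S, pow_add. simpl pow. rewrite !Rabs_mult.
      assert (Rabs (rq qa q k) <> 0) by (apply Rabs_no_R0; auto).
      assert (Rabs (rq q q k) <> 0) by (apply Rabs_no_R0; auto).
      assert (Rabs (1 - qa * q ^ k) <> 0) by (apply Rabs_no_R0; auto).
      assert (Rabs (1 - q * q ^ k) <> 0) by (apply Rabs_no_R0; auto).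
      assert (q ^ binom2 k <> 0) by (apply pow_nonzero; lra).
      assert (C0 ^ k <> 0) by (apply pow_nonzero; lra).
      field. repeat split; assumption. }
    assert (Hg : is_lim_seq (fun k => q ^ k) 0) by (apply is_lim_seq_geom; rewrite Rabs_pos_eq; lra).
    assert (X : is_lim_seq (fun k => C0 * q ^ k / (Rabs (1 - qa * q ^ k) * Rabs (1 - q * q ^ k)))
                  (C0 * 0 / (Rabs (1 - qa * 0) * Rabs (1 - q * 0)))).
    { apply is_lim_seq_div'.
      - apply is_lim_seq_mult'; [apply is_lim_seq_const|exact Hg].
      - apply is_lim_seq_mult'.
        + apply (is_lim_seq_abs _ (1 - qa * 0)). apply is_lim_seq_minus'; [apply is_lim_seq_const|].
          apply is_lim_seq_mult'; [apply is_lim_seq_const|exact Hg].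
        + apply (is_lim_seq_abs _ (1 - q * 0)). apply is_lim_seq_minus'; [apply is_lim_seq_const|].
          apply is_lim_seq_mult'; [apply is_lim_seq_const|exact Hg].
      - rewrite !Rmult_0_r, Rminus_0_r, Rabs_R1. lra. }
    replace (C0 * 0 / (Rabs (1 - qa * 0) * Rabs (1 - q * 0))) with 0 in X by (unfold Rdiv; ring).
    exact X. }
  destruct Hbound as [N HN].
  destruct (tannery (fun n k => Re (T n k)) (fun k => Re (rhs_term k)) M N
    (fun k => Ccv_Re _ _ (Hpt k))
    (fun n k Hn => Rle_trans _ _ _ (re_le_Cmod _) (HN n k Hn)) HM) as [HgR [HfR HlR]].
  destruct (tannery (fun n k => Im (T n k)) (fun k => Im (rhs_term k)) M N
    (fun k => Ccv_Im _ _ (Hpt k))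
    (fun n k Hn => Rle_trans _ _ _ (im_le_Cmod' _) (HN n k Hn)) HM) as [HgI [HfI HlI]].
  exists ((Series (fun k => Re (rhs_term k)), Series (fun k => Im (rhs_term k))) : C).
  split.
  - unfold is_series. apply C_lim_comp.
    + eapply is_lim_seq_ext; [intros N'; symmetry; apply Re_sum_n|]. apply (Series_correct _ HgR).
    + eapply is_lim_seq_ext; [intros N'; symmetry; apply Im_sum_n|]. apply (Series_correct _ HgI).
  - apply C_lim_comp.
    + eapply is_lim_seq_ext; [|exact HlR]. intros n. unfold phi_n, rphis. match goal with |- _ = Re (?x, ?y) => change (Re (x, y)) with x end.
      unfold Series. f_equal. apply Lim_seq_ext. intros N'. rewrite Re_sum_n. reflexivity.
    + eapply is_lim_seq_ext; [|exact HlI]. intros n. unfold phi_n, rphis. match goal with |- _ = Im (?x, ?y) => change (Im (x, y)) with y end.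
      unfold Series. f_equal. apply Lim_seq_ext. intros N'. rewrite Im_sum_n. reflexivity.
Qed.
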